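(* Let $T$ be a tree with positive edge weights rooted at the homebase $r$, and let $q\ge 0$. In every cost-optimal strategy exploring $T$, if an agent enters a subtree $T_v$ (for a vertex $v$), then it explores (i.e., is the first to visit) at least one leaf of $T_v$.
   Context: Exploration model: given a connected graph with positive edge weights, a homebase vertex, and invoking cost $q\ge 0$, a strategy is a sequence of moves, each either invoking a new agent (appearing at the homebase) or an agent traversing an edge incident to its current vertex. A vertex is explored when first visited; the strategy explores the graph when every vertex has been visited by some agent (agents need not return). With $k$ agents, agent $i$ traversing total distance $d_i$ (weights counted with multiplicity), the cost is $kq+\sum_i d_i$; a strategy is cost-optimal if it explores the graph with minimum cost (off-line setting, graph known). For a rooted tree, $T_v$ denotes the subtree consisting of $v$ and its descendants; a leaf is a non-root vertex with no children. *)

(* Defs.v *)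
From HB Require Import structures.
From mathcomp Require Import all_boot all_order all_algebra.
From mathcomp Require Import reals.
Set Implicit Arguments. Unset Strict Implicit. Unset Printing Implicit Defensive.
Import Order.TTheory GRing.Theory Num.Theory.
Local Open Scope ring_scope.

Section Explore.
Variables (V : finType) (e : rel V) (r : V).

Definition simple_graph : Prop := symmetric e /\ irreflexive e.
Definition graph_connected : Prop := forall x y : V, connect e x y.
Definition graph_acyclic : Prop :=
  forall c : seq V, uniq c -> (2 < size c)%N -> ~~ cycle e c.
Definition is_tree : Prop := [/\ simple_graph, graph_connected & graph_acyclic].

(* u lies in T_v (v and its descendants w.r.t. root r): v lies on every
   walk from r to u, i.e. on the r-u path of the tree. *)
Definition in_subtree (v u : V) : Prop :=
  forall p : seq V, path e r p -> last r p = u -> v \in r :: p.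

(* leaf: non-root vertex with no children (a child of x is a neighbour in T_x) *)
Definition is_leaf (x : V) : Prop :=
  x <> r /\ ~ (exists y, e x y /\ in_subtree x y).

(* Invoke: a new agent appears at r (agents are numbered 0,1,2,... in order
   of invocation); Step i u: agent i traverses the edge from its current
   vertex to u. *)
Inductive move := Invoke | Step of nat & V.

Fixpoint valid_from (pos : seq V) (s : seq move) : bool :=
  match s with
  | [::] => true
  | Invoke :: s' => valid_from (rcons pos r) s'
  | Step i u :: s' =>
      [&& (i < size pos)%N, e (nth r pos i) u & valid_from (set_nth r pos i u) s']
  end.
Definition valid (s : seq move) : bool := valid_from [::] s.

Fixpoint trace_from (pos : seq V) (s : seq move) : seq (nat * V * V) :=
  match s with
  | [::] => [::]
  | Invoke :: s' => trace_from (rcons pos r) s'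
  | Step i u :: s' => (i, nth r pos i, u) :: trace_from (set_nth r pos i u) s'
  end.
Definition trace (s : seq move) := trace_from [::] s.

Definition is_invoke (m : move) : bool := if m is Invoke then true else false.
Definition n_agents (s : seq move) : nat := count is_invoke s.

Definition visited (s : seq move) (x : V) : bool :=
  if x == r then has is_invoke s else has (fun t => t.2 == x) (trace s).

Definition explores_graph (s : seq move) : Prop := forall x, visited s x.

(* agent i explores x: it is the first agent to visit x *)
Definition explores (s : seq move) (i : nat) (x : V) : bool :=
  if x == r then (i == 0%N) && has is_invoke s
  else let tr := trace s in
       has (fun t => t.2 == x) tr &&
       ((nth (0%N, r, r) tr (find (fun t => t.2 == x) tr)).1.1 == i).

Definition enters (s : seq move) (i : nat) (v : V) : Prop :=
  exists x u, (i, x, u) \in trace s /\ ~ in_subtree v x /\ in_subtree v u.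

Variable R : realType.
Variables (w : V -> V -> R) (q : R).

Definition cost (s : seq move) : R :=
  q * (n_agents s)%:R + \sum_(t <- trace s) w t.1.2 t.2.

Definition cost_optimal (s : seq move) : Prop :=
  [/\ valid s, explores_graph s &
      forall s', valid s' -> explores_graph s' -> cost s <= cost s'].

End Explore.

(* Main.v *)
Require Import Defs.
From HB Require Import structures.
From mathcomp Require Import all_boot all_order all_algebra.
From mathcomp Require Import reals boolp.
From mathcomp Require Import lra.
Import Order.TTheory GRing.Theory Num.Theory.
Set Implicit Arguments. Unset Strict Implicit.
Section Tree.
Variables (V : finType) (e : rel V) (r : V).
Hypothesis Htree : is_tree e.

Local Notation ins := (in_subtree e r).

Lemma ins_r v : ins v r -> v = r.
Proof. move=> H. have := H [::] erefl erefl. by rewrite inE => /eqP. Qed.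

Lemma ins_refl x : ins x x.
Proof. move=> p _ <-. exact: mem_last. Qed.

Lemma ins_trans a b c : ins a b -> ins b c -> ins a c.
Proof.
move=> Hab Hbc p Hp Hl.
have Hb := Hbc p Hp Hl.
move: Hp Hl; case/splitPl: Hb => p1 p2 Hl1.
rewrite cat_path => /andP[Hp1 _] _.
have := Hab p1 Hp1 Hl1.
rewrite -cat_cons mem_cat => ->. done.
Qed.

Lemma uniq_path y : exists p, [/\ path e r p, last r p = y & uniq (r :: p)].
Proof.
case: Htree => _ Hc _. case/connectP: (Hc r y) => p Hp ->.
case: (shortenP Hp) => p' Hp' Hu _. by exists p'.
Qed.

Lemma ins_antisym a b : ins a b -> ins b a -> a = b.
Proof.
move=> Hab Hba. have [p [Hp Hl Hu]] := uniq_path b.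
have Ha := Hab p Hp Hl.
move: Hp Hl Hu; case/splitPl: Ha => p1 p2 Hl1.
rewrite cat_path last_cat Hl1 => /andP[Hp1 _] Hl2 Hu.
have Hb := Hba p1 Hp1 Hl1.
move: Hl2 Hu; case: p2 => [|z p2]; first by move=> /= ->.
move=> Hl2 Hu.
have Hbz : b \in z :: p2 by rewrite -Hl2 last_cons mem_last.
move: Hu; rewrite -cat_cons cat_uniq => /and3P[_ /hasP H _].
exfalso; apply: H. by exists b.
Qed.

Lemma leaf_exists x : x <> r -> exists l, is_leaf e r l /\ ins x l.
Proof.
pose m y := #|[set z | `[< ins y z >]]|.
suff H : forall n y, y <> r -> (m y <= n)%N -> exists l, is_leaf e r l /\ ins y l.
  by move=> Hx; exact: (H _ x Hx (leqnn _)).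
elim=> [|n IH] y Hy Hm;
  (case: (pselect (is_leaf e r y)) => [Hl|Hnl]; first by exists y; split=>//; exact: ins_refl);
  (have [z [Hyz Hins]] : exists z, e y z /\ ins y z
     by apply: contrapT => H; apply: Hnl; split);
  (have Hlt : (m z < m y)%N by
    apply: proper_card; apply/properP; split;
    [ apply/subsetP => u; rewrite !inE => /asboolP Hu; apply/asboolP; exact: ins_trans Hins Hu
    | exists y; rewrite inE; [apply/asboolP; exact: ins_refl
      | apply/negP => /asboolP Hzy; have Eyz := ins_antisym Hins Hzy; subst;
        case: Htree => [[_ Hirr] _ _]; by rewrite Hirr in Hyz]]).
  by have := leq_trans Hlt Hm.
have Hz : z <> r by move=> Ez; subst; apply: Hy; exact: ins_r Hins.
have Hmz : (m z <= n)%N by rewrite -ltnS (leq_trans Hlt Hm).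
have [l [Hl Hzl]] := IH z Hz Hmz.
exists l; split=>//; exact: ins_trans Hins Hzl.
Qed.

Lemma cross_in v x u : e x u -> ~ ins v x -> ins v u -> u = v.
Proof.
move=> Hxu Hx Hu.
have [p [Hp Hl Hv]] : exists p, [/\ path e r p, last r p = x & v \notin r :: p].
  apply: contrapT => H; apply: Hx => p Hp Hl. apply: contrapT => Hn.
  apply: H; exists p; split=>//. by apply/negP.
have := Hu (rcons p u); rewrite rcons_path Hp Hl Hxu last_rcons => /(_ erefl erefl).
rewrite -rcons_cons mem_rcons inE => /orP[/eqP->//|]. by rewrite (negbTE Hv).
Qed.

Lemma avoid v x : ~ ins v x -> exists p, [/\ path e r p, last r p = x & v \notin r :: p].
Proof.
move=> Hx; apply: contrapT => H; apply: Hx => p Hp Hl. apply: contrapT => Hn.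
apply: H; exists p; split=>//. by apply/negP.
Qed.

Lemma last_rev_belast (p : seq V) : last (last r p) (rev (belast r p)) = r.
Proof.
have E : (last r p) :: rev (belast r p) = rcons (rev p) r.
  by rewrite -rev_rcons -lastI rev_cons.
by rewrite -(last_cons r) E last_rcons.
Qed.

Lemma cross_uniq v x u x' u' : e x u -> ~ ins v x -> ins v u ->
  e x' u' -> ~ ins v x' -> ins v u' -> x = x'.
Proof.
move=> Hxu Hx Hu Hxu' Hx' Hu'.
have Eu := cross_in Hxu Hx Hu. have Eu' := cross_in Hxu' Hx' Hu'. subst u u'.
case: Htree => [[Hsym Hirr] _ Hacyc].
have [px [Hp Hl Hv]] := avoid Hx.
have [px' [Hp' Hl' Hv']] := avoid Hx'.
case: (eqVneq x x') => // Hne; exfalso.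
have Es : (fun a b => e b a) =2 e by move=> a b; rewrite Hsym.
have Hrp : path e x (rev (belast r px)).
  by rewrite -Hl rev_path (eq_path Es).
have Hlr : last x (rev (belast r px)) = r by rewrite -Hl last_rev_belast.
set q := rev (belast r px) ++ px'.
have Hq : path e x q by rewrite cat_path Hrp Hlr Hp'.
have Hlq : last x q = x' by rewrite last_cat Hlr.
have Hvq : v \notin x :: q.
  rewrite /q -cat_cons mem_cat negb_or; apply/andP; split; last first.
    by apply: contra Hv'; rewrite inE => ->; rewrite orbT.
  rewrite inE negb_or; apply/andP; split.
    apply: contra Hv => /eqP ->; rewrite -Hl; exact: mem_last.
  by apply: contra Hv; rewrite mem_rev; apply: mem_belast.
move: Hlq; case: (shortenP Hq) => q' Hq' Huq Hsub Hlq.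
have Hvq' : v \notin x :: q'.
  apply: contra Hvq; rewrite !inE => /orP[->//|/Hsub ->]; by rewrite orbT.
have Hu2 : uniq (v :: x :: q') by rewrite /= Hvq'; rewrite /= in Huq.
have Hs : (2 < size (v :: x :: q'))%N.
  case: q' {Hq' Huq Hsub Hvq' Hu2} Hlq => [/= E|]; first by rewrite E eqxx in Hne.
  by [].
have Hc : cycle e (v :: x :: q').
  rewrite /= rcons_path Hq' Hlq Hsym Hxu' andbT /=.
  by rewrite Hxu.
by rewrite (negbTE (Hacyc _ Hu2 Hs)) in Hc.
Qed.

End Tree.
Section Strat.
Variables (V : finType) (e : rel V) (r : V).

Lemma trace_edges pos s : valid_from e r pos s ->
  forall t, t \in trace_from r pos s -> e t.1.2 t.2.
Proof.
elim: s pos => [|m s IH] pos //=.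
case: m => [|j u] /=; first exact: IH.
case/and3P=> _ He Hv t; rewrite inE => /orP[/eqP -> //|]; exact: IH.
Qed.

Definition hasj (j : nat) (y : V) (H : seq (nat * V * V)) :=
  has (fun t => (t.1.1 == j) && (t.2 == y)) H.

Lemma S2g s pos H : valid_from e r pos s ->
  (forall j, exists p, [/\ path e r p, last r p = nth r pos j &
      forall y, y \in p -> hasj j y H]) ->
  forall t, t \in trace_from r pos s -> exists p, [/\ path e r p, last r p = t.2 &
      forall y, y \in p -> hasj t.1.1 y (H ++ trace_from r pos s)].
Proof.
elim: s pos H => [|m s IH] pos H //=.
case: m => [|j u] /=.
  move=> Hv Hp; apply: IH => // k.
  rewrite nth_rcons; case: ifP => _; first exact: Hp.
  exists [::]; split => //; by case: ifP.
case/and3P=> Hj He Hv Hp.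
have [pj [Hpj Hlj Hsj]] := Hp j.
have Hnew : forall k, exists p, [/\ path e r p, last r p = nth r (set_nth r pos j u) k &
      forall y, y \in p -> hasj k y (rcons H (j, nth r pos j, u))].
  move=> k; rewrite nth_set_nth /=; case: eqP => [->|Hk].
    exists (rcons pj u); split.
    - by rewrite rcons_path Hpj Hlj He.
    - by rewrite last_rcons.
    - move=> y; rewrite mem_rcons inE => /orP[/eqP->|/Hsj].
        by rewrite /hasj -cats1 has_cat /= !eqxx orbT.
      by rewrite /hasj -cats1 has_cat => ->.
  have [pk [Hpk Hlk Hsk]] := Hp k.
  exists pk; split => // y /Hsk; by rewrite /hasj -cats1 has_cat => ->.
move=> t; rewrite inE => /orP[/eqP->|Ht].
  exists (rcons pj u); split.
  - by rewrite rcons_path Hpj Hlj He.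
  - by rewrite last_rcons.
  - move=> y; rewrite mem_rcons inE => /orP[/eqP->|/Hsj].
      by rewrite /hasj has_cat /= !eqxx orbT.
    by rewrite /hasj has_cat => ->.
have [p [Hp1 Hp2 Hp3]] := IH _ _ Hv Hnew t Ht.
exists p; split => // y /Hp3; by rewrite cat_rcons.
Qed.

Lemma S2 s : valid e r s -> forall t, t \in trace r s -> exists p, [/\ path e r p, last r p = t.2 &
      forall y, y \in p -> hasj t.1.1 y (trace r s)].
Proof.
move=> Hv t Ht. have := S2g (H := [::]) Hv _ Ht.
apply. move=> j; exists [::]; split => //; by case: j.
Qed.

Section Sim.
Variables (i : nat) (inT : V -> bool) (p0 : V).
Hypothesis Hr : ~~ inT r.
Hypothesis Hc1 : forall x u, e x u -> ~~ inT x -> inT u -> x = p0.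
Hypothesis Hc2 : forall x u, e x u -> inT x -> ~~ inT u -> u = p0.

Definition f y := if inT y then p0 else y.
Definition keep (t : nat * V * V) := ~~ ((t.1.1 == i) && (inT t.1.2 || inT t.2)).

Fixpoint del (pos : seq V) (s : seq (move V)) : seq (move V) :=
  match s with
  | [::] => [::]
  | Invoke :: s' => Invoke V :: del (rcons pos r) s'
  | Step j u :: s' => (if keep (j, nth r pos j, u) then [:: Step j u] else [::])
                      ++ del (set_nth r pos j u) s'
  end.

Definition rel_pos pos pos' := size pos' = size pos /\
  forall j, nth r pos' j = (if j == i then f (nth r pos j) else nth r pos j).

Lemma fr : f r = r.
Proof. by rewrite /f (negbTE Hr). Qed.

Lemma del_count pos s : count (@is_invoke V) (del pos s) = count (@is_invoke V) s.
Proof.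
elim: s pos => [|m s IH] pos //=; case: m => [|j u] /=; first by rewrite IH.
by rewrite count_cat IH; case: ifP.
Qed.

Lemma sim s pos pos' H : rel_pos pos pos' -> valid_from e r pos s ->
  (nth r pos' i = r \/ has (fun t => t.2 == nth r pos' i) H) ->
  [/\ valid_from e r pos' (del pos s),
      trace_from r pos' (del pos s) = filter keep (trace_from r pos s) &
      forall t, t \in trace_from r pos s -> t.1.1 = i -> ~~ inT t.2 ->
        t.2 = r \/ has (fun t' => t'.2 == t.2) (H ++ trace_from r pos' (del pos s))].
Proof.
elim: s pos pos' H => [|m s IH] pos pos' H [Hsz Hnth] //=.
case: m => [|j u] /=.
  move=> Hv Hinv.
  have Hrel : rel_pos (rcons pos r) (rcons pos' r).
    split; first by rewrite !size_rcons Hsz.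
    move=> k; rewrite !nth_rcons !if_same Hsz Hnth.
    case: ifP => _ //; case: ifP => // _; by rewrite fr.
  apply: IH => //.
  rewrite nth_rcons !if_same; case: ifP => _ //; by left.
case/and3P=> Hj He Hv Hinv.
set y := nth r pos j.
case Hk: (keep (j, y, u)) => /=.
- have Hy : nth r pos' j = y.
    rewrite Hnth; case: eqP => // Eji; move: Hk; rewrite /keep /= (_ : (j == i) = true) /= ?negb_or; last by apply/eqP.
    by case/andP => Hy _; rewrite /f (negbTE Hy).
  have Hrel : rel_pos (set_nth r pos j u) (set_nth r pos' j u).
    split; first by rewrite !size_set_nth Hsz.
    move=> k; rewrite !nth_set_nth /=.
    case: (eqVneq k j) => [->|Hkj]; last exact: Hnth.
    case: eqP => // Eji; move: Hk; rewrite /keep /= (_ : (j == i) = true) /= ?negb_or; last by apply/eqP.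
    by case/andP => _ Hu; rewrite /f (negbTE Hu).
  have Hinv' : nth r (set_nth r pos' j u) i = r \/
      has (fun t => t.2 == nth r (set_nth r pos' j u) i) (rcons H (j, y, u)).
    rewrite nth_set_nth /=; case: eqP => [_|_].
      by right; rewrite -cats1 has_cat /= eqxx orbT.
    case: Hinv => [->|Hh]; [by left|right].
    by rewrite -cats1 has_cat Hh.
  have [IH1 IH2 IH3] := IH _ _ _ Hrel Hv Hinv'.
  rewrite Hy Hsz Hj He IH1 IH2; split => // t; rewrite inE => /orP[/eqP->|Ht] /= Ht1 Ht2.
    by right; rewrite has_cat /= eqxx orbT.
  by move: (IH3 t Ht Ht1 Ht2); rewrite cat_rcons IH2.
- have Eji : j = i by move: Hk => /negbFE /andP[/eqP].
  have Hyu : inT y || inT u by move: Hk => /negbFE /andP[].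
  subst j.
  have Hrel : rel_pos (set_nth r pos i u) pos'.
    split; first by rewrite size_set_nth Hsz (maxn_idPr Hj).
    move=> k; rewrite nth_set_nth /=; case: (eqVneq k i) => [->|Hki]; last by rewrite Hnth (negbTE Hki).
    rewrite Hnth eqxx -/y /f.
    case Hiy: (inT y); case Hiu: (inT u) => //.
      by rewrite (Hc2 He) ?Hiy ?Hiu.
    apply: (Hc1 He); by rewrite ?Hiy ?Hiu.
    by rewrite Hiy Hiu in Hyu.
  have [IH1 IH2 IH3] := IH _ _ _ Hrel Hv Hinv.
  rewrite IH1 IH2; split => // t; rewrite inE => /orP[/eqP->|Ht] /= Ht1 Ht2; last first.
    by rewrite -IH2; exact: IH3.
  have Hiy : inT y by move: Hyu; rewrite (negbTE Ht2) orbF.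
  have Eu : u = p0 := Hc2 He Hiy Ht2.
  have Ep : nth r pos' i = u by rewrite Hnth eqxx /f -/y Hiy Eu.
  case: Hinv => [Hri|Hh]; first by left; rewrite -Ep.
  by right; rewrite has_cat -Ep Hh.
Qed.

End Sim.
End Strat.
Unset Implicit Arguments. Set Strict Implicit.
Local Open Scope ring_scope.

Lemma sum_le (R : realType) (T : eqType) (l : seq T) (P : pred T) (F : T -> R) :
  (forall t, t \in l -> 0 < F t) -> \sum_(t <- l | P t) F t <= \sum_(t <- l) F t.
Proof.
elim: l => [|a l IH] H; first by rewrite !big_nil.
rewrite !big_cons.
have Ha : 0 < F a by apply: H; rewrite inE eqxx.
have Hl : \sum_(t <- l | P t) F t <= \sum_(t <- l) F t.
  by apply: IH => t Ht; apply: H; rewrite inE Ht orbT.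
case: (P a); lra.
Qed.

Lemma sum_lt (R : realType) (T : eqType) (l : seq T) (P : pred T) (F : T -> R) t0 :
  (forall t, t \in l -> 0 < F t) -> t0 \in l -> ~~ P t0 ->
  \sum_(t <- l | P t) F t < \sum_(t <- l) F t.
Proof.
elim: l => [|a l IH] H //.
rewrite inE => Ht0 HP; rewrite !big_cons.
have Ha : 0 < F a by apply: H; rewrite inE eqxx.
have Hl : \sum_(t <- l | P t) F t <= \sum_(t <- l) F t.
  by apply: sum_le => t Ht; apply: H; rewrite inE Ht orbT.
case/orP: Ht0 => [/eqP Ea|Ht0].
  subst a; rewrite (negbTE HP); lra.
have Hlt : \sum_(t <- l | P t) F t < \sum_(t <- l) F t.
  by apply: IH => // t Ht; apply: H; rewrite inE Ht orbT.
case: (P a); lra.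
Qed.

Theorem mainTheorem4 (V : finType) (e : rel V) (r : V) (R : realType)
    (w : V -> V -> R) (q : R) :
  is_tree e ->
  (forall x y, w x y = w y x) ->
  (forall x y, e x y -> 0 < w x y) ->
  0 <= q ->
  forall s : seq (move V), cost_optimal e r w q s ->
  forall (i : nat) (v : V), enters e r s i v ->
  exists x : V, [/\ is_leaf e r x, in_subtree e r v x & explores r s i x].
Proof.
move=> Htree Hw Hwpos Hq s [Hval Hexp Hopt] i v [x0 [u0 [Hin [Hx0 Hu0]]]].
apply: contrapT => Hno.
have Hnoleaf : forall l, is_leaf e r l -> in_subtree e r v l -> ~~ explores r s i l.
  move=> l Hl Hvl; apply/negP => Hex; apply: Hno; by exists l.
have [[Hsym Hirr] _ _] := Htree.
pose inT := fun y => `[< in_subtree e r v y >].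
have He0 : e x0 u0 := trace_edges Hval Hin.
have Hr : ~~ inT r.
  apply/negP => /asboolP Hvr; have Evr := ins_r Hvr; subst v.
  by apply: Hx0 => p _ _; rewrite inE eqxx.
have Hc1 : forall x u, e x u -> ~~ inT x -> inT u -> x = x0.
  move=> x u Hxu /asboolP Hx /asboolP Hu.
  exact: (cross_uniq Htree Hxu Hx Hu He0 Hx0 Hu0).
have Hc2 : forall x u, e x u -> inT x -> ~~ inT u -> u = x0.
  by move=> x u Hxu Hx Hu; apply: (Hc1 u x) => //; rewrite Hsym.
set s' := del r i inT [::] s.
have Hrel : rel_pos r i inT x0 [::] [::].
  split => // j; rewrite nth_nil; case: ifP => // _; by rewrite /f (negbTE Hr).
have [Hval' Htr' Hvis'] := sim Hr Hc1 Hc2 (H := [::]) Hrel Hval (or_introl (nth_nil _ _)).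
have Hexp' : explores_graph r s'.
  move=> x; rewrite /visited; case: (eqVneq x r) => [_|Hxr].
    have := Hexp r; rewrite /visited eqxx !has_count.
    by rewrite /s' del_count.
  have := Hexp x; rewrite /visited (negbTE Hxr) => Hhas.
  rewrite /trace Htr'.
  case: (pselect (in_subtree e r v x)) => Hvx.
    have [l [Hleaf Hxl]] := leaf_exists Htree (fun E => (negP Hxr) (introT eqP E)).
    have Hvl := ins_trans Hvx Hxl.
    have Hlr : l != r by apply/eqP; case: Hleaf.
    have := Hexp l; rewrite /visited (negbTE Hlr) => Hhl.
    set t0 := nth (0%N, r, r) (trace r s) (find (fun t => t.2 == l) (trace r s)).
    have Ht0 : t0 \in trace r s by apply: mem_nth; rewrite -has_find.
    have Ht0l : t0.2 == l := nth_find _ Hhl.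
    have Hj : t0.1.1 != i.
      apply/negP => Hj; have := Hnoleaf l Hleaf Hvl.
      by rewrite /explores (negbTE Hlr) Hhl /= -/t0 Hj.
    have [p [Hp Hlp Hsp]] := S2 Hval Ht0.
    have : x \in r :: p by apply: Hxl => //; rewrite Hlp (eqP Ht0l).
    rewrite inE (negbTE Hxr) /= => /Hsp /hasP [t Ht /andP [/eqP Htj /eqP Htx]].
    apply/hasP; exists t; last by rewrite Htx.
    rewrite mem_filter Ht andbT /keep Htj (negbTE Hj) //.
  case/hasP: Hhas => t Ht /eqP Htx.
  case: (eqVneq t.1.1 i) => Hti.
    have Hnt : ~~ inT t.2 by rewrite Htx; apply/asboolP.
    case: (Hvis' t Ht Hti Hnt) => [Er|]; first by rewrite -Htx Er eqxx in Hxr.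
    by rewrite /= Htx /trace Htr'.
  apply/hasP; exists t; last by rewrite Htx.
  by rewrite mem_filter Ht andbT /keep (negbTE Hti).
have Hle := Hopt s' Hval' Hexp'.
have Hlt : cost r w q s' < cost r w q s.
  rewrite /cost /n_agents /s' del_count /trace Htr' big_filter.
  have Hnk : ~~ keep i inT (i, x0, u0).
    rewrite /keep /= eqxx /=; apply/negPn; apply/orP; right; exact/asboolP.
  have Hpos : forall t, t \in trace r s -> 0 < w t.1.2 t.2.
    move=> t Ht; apply: Hwpos; exact: (trace_edges Hval Ht).
  have := @sum_lt R _ (trace r s) (keep i inT) (fun t => w t.1.2 t.2) _ Hpos Hin Hnk.
  rewrite /trace.
  lra.
lra.
Qed.
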